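(* Let $\mathcal A$ be an S-ring over a finite group $G$ and $H$ a normal subgroup of $G$ with $H\in\mathcal H(\mathcal A)$. Let $\mathcal A'$ be the S-ring over $G$ generated by $\mathcal A$ and the cosets of $G$ by $H$, and let $H'=\{x\mapsto xh:\ h\in H\}$. Then $\mathrm{Aut}(\mathcal A)$ normalizes the group $\langle\mathrm{Aut}(\mathcal A'),H'\rangle$.
   Context: An S-ring over a finite group $G$ is a subring $\mathcal A$ of $\mathbb Z[G]$ with $\mathbb Z$-basis $\{\sum_{x\in X}x: X\in\mathcal S(\mathcal A)\}$ for a partition $\mathcal S(\mathcal A)$ of $G$ into nonempty basic sets with $\{1\}\in\mathcal S(\mathcal A)$ and $X\in\mathcal S(\mathcal A)\Rightarrow X^{-1}\in\mathcal S(\mathcal A)$; $\mathcal S^*(\mathcal A)$ is the set of unions of basic sets and $\mathcal H(\mathcal A)$ the set of subgroups of $G$ lying in $\mathcal S^*(\mathcal A)$. The S-ring generated by $\mathcal A$ and sets $Y_j$ is the smallest S-ring $\mathcal A'$ with $\mathcal S^*(\mathcal A)\cup\{Y_j\}\subseteq\mathcal S^*(\mathcal A')$. For $X\subseteq G$ let $R_G(X)=\{(g,xg): g\in G, x\in X\}$. The Cayley scheme of $\mathcal A$ is the partition $\{R_G(X): X\in\mathcal S(\mathcal A)\}$ of $G\times G$; $\mathrm{Aut}(\mathcal A)$ is the group of permutations $f$ of $G$ with $1^f=1$ and $R_G(X)^f=R_G(X)$ for all $X\in\mathcal S(\mathcal A)$. *)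

(* Defs.v *)
From HB Require Import structures.
From mathcomp Require Import all_boot all_order all_algebra all_fingroup.
Set Implicit Arguments. Unset Strict Implicit. Unset Printing Implicit Defensive.
Import GRing.Theory.

(* The finite group G is the whole of a finGroupType gT.
   Elements of the group ring Z[G] are represented as functions gT -> int. *)

Section SRings.
Variable gT : finGroupType.

(* indicator of a set X, i.e. the element  sum_{x in X} x  of Z[G] *)
Definition ind (X : {set gT}) : gT -> int := fun z => Posz (z \in X).

Definition gconv (f g : gT -> int) : gT -> int :=
  fun z => (\sum_(x : gT) f x * g (x^-1 * z)%g)%R.

Definition in_span (S : {set {set gT}}) (f : gT -> int) : Prop :=
  exists c : {set gT} -> int, forall z, f z = (\sum_(X in S) c X * ind X z)%R.

(* S is the set of basic sets of an S-ring over gT: a partition of G into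
   nonempty sets, {1} is basic, closed under inversion, and the Z-span of the
   basic elements is closed under the product of Z[G] (it contains 1 = ind [set 1]
   and is closed under addition automatically; by bilinearity closure under
   products amounts to closure on products of basis elements). *)
Definition is_Sring (S : {set {set gT}}) : Prop :=
  [/\ partition S [set: gT],
      [set 1%g] \in S,
      (forall X, X \in S -> (X^-1)%g \in S) &
      (forall X Y, X \in S -> Y \in S -> in_span S (gconv (ind X) (ind Y)))].

Definition Sstar (S : {set {set gT}}) (Y : {set gT}) : Prop :=
  exists2 T : {set {set gT}}, T \subset S & cover T = Y.

Definition in_HA (S : {set {set gT}}) (H : {group gT}) : Prop := Sstar S H.

Definition generated_Sring (S : {set {set gT}}) (Ys : {set {set gT}})
    (S' : {set {set gT}}) : Prop :=
  [/\ is_Sring S',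
      (forall Y, Sstar S Y -> Sstar S' Y),
      (forall Y, Y \in Ys -> Sstar S' Y) &
      (forall S'', is_Sring S'' ->
         (forall Y, Sstar S Y -> Sstar S'' Y) ->
         (forall Y, Y \in Ys -> Sstar S'' Y) ->
         forall Y, Sstar S' Y -> Sstar S'' Y)].

Definition RG (X : {set gT}) : {set gT * gT} :=
  [set p : gT * gT | (p.2 * p.1^-1)%g \in X].

Definition AutS (S : {set {set gT}}) : {set {perm gT}} :=
  [set f : {perm gT} | (f 1%g == 1%g) &&
     [forall X in S, [set (f p.1, f p.2) | p in RG X] == RG X]].

Definition rmul_perm (h : gT) : {perm gT} := perm (@mulIg gT h).

Definition Hright (H : {set gT}) : {set {perm gT}} := [set rmul_perm h | h in H].

End SRings.

(* Main.v *)
Require Import Defs.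
From HB Require Import structures.
From mathcomp Require Import all_boot all_order all_algebra all_fingroup.
Local Open Scope group_scope.
Set Implicit Arguments. Unset Strict Implicit. Unset Printing Implicit Defensive.


Section Aux.
Variable gT : finGroupType.
Implicit Types (phi psi : {perm gT}) (X Y : {set gT}).

Definition pres phi Y : bool :=
  [forall u, forall v, (v * u^-1 \in Y) == (phi v * (phi u)^-1 \in Y)].

Lemma presP phi Y : reflect (forall u v, (v * u^-1 \in Y) = (phi v * (phi u)^-1 \in Y)) (pres phi Y).
Proof.
apply: (iffP forallP) => [H u v | H u]; first by have /forallP/(_ v)/eqP := H u.
by apply/forallP => v; rewrite H.
Qed.

Lemma presM phi psi Y : pres phi Y -> pres psi Y -> pres (phi * psi) Y.
Proof. by move=> /presP h1 /presP h2; apply/presP => u v; rewrite !permM h1 h2. Qed.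

Lemma presV phi Y : pres phi Y -> pres phi^-1 Y.
Proof. by move=> /presP h; apply/presP => u v; have := h (phi^-1 u) (phi^-1 v); rewrite !permKV. Qed.

Lemma pres_rmul h Y : pres (rmul_perm h) Y.
Proof. by apply/presP => u v; rewrite !permE invMg mulgA mulgK. Qed.

Lemma pres_cover phi (T : {set {set gT}}) : (forall X, X \in T -> pres phi X) -> pres phi (cover T).
Proof.
move=> h; apply/presP => u v; apply/bigcupP/bigcupP => -[X XT xX]; exists X => //.
  by rewrite -(presP _ _ (h X XT)).
by rewrite (presP _ _ (h X XT)).
Qed.

Lemma aut_pres phi X : [set (phi p.1, phi p.2) | p in RG X] == RG X -> pres phi X.
Proof.
move=> /eqP E; apply/presP => u v.
apply/idP/idP => H.
  have : (phi u, phi v) \in RG X.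
    by rewrite -E; apply/imsetP; exists (u, v) => //; rewrite inE.
  by rewrite inE.
have : (phi u, phi v) \in RG X by rewrite inE.
rewrite -E => /imsetP [[a b]] /=; rewrite inE /= => ab [/perm_inj eu /perm_inj ev]; rewrite eu ev.
exact: ab.
Qed.

Lemma pres_aut phi X : pres phi X -> [set (phi p.1, phi p.2) | p in RG X] == RG X.
Proof.
move=> /presP h; apply/eqP/setP => -[a b]; apply/imsetP/idP.
  by move=> [[u v]]; rewrite !inE /= => uv [-> ->]; rewrite -h.
rewrite inE /= => ab; exists (phi^-1 a, phi^-1 b) => /=; last by rewrite !permKV.
by rewrite inE /= h !permKV.
Qed.

Lemma AutSP (S : {set {set gT}}) phi : reflect (phi 1 = 1 /\ forall X, X \in S -> pres phi X) (phi \in AutS S).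
Proof.
rewrite inE; apply: (iffP andP) => [[/eqP h1 /forallP h2] | [h1 h2]].
  by split => // X XS; apply: aut_pres; have /implyP := h2 X; apply.
by split; [apply/eqP | apply/forallP => X; apply/implyP => XS; apply: pres_aut; apply: h2].
Qed.

Lemma AutS_star (S : {set {set gT}}) phi Y : phi \in AutS S -> Sstar S Y -> pres phi Y.
Proof.
move=> /AutSP [_ h] [T TS <-]; apply: pres_cover => X XT; apply: h.
exact: (subsetP TS).
Qed.

End Aux.


Section Atoms.
Variable gT : finGroupType.
Variable phi : {perm gT}.
Implicit Types (X Y W : {set gT}).

Lemma presT : pres phi setT.
Proof. by apply/presP => u v; rewrite !inE. Qed.

Lemma presC Y : pres phi Y -> pres phi (~: Y).
Proof. by move=> /presP h; apply/presP => u v; rewrite !inE h. Qed.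

Lemma presI Y W : pres phi Y -> pres phi W -> pres phi (Y :&: W).
Proof. by move=> /presP h /presP h'; apply/presP => u v; rewrite !inE h h'. Qed.

Lemma presVs Y : pres phi Y -> pres phi (Y^-1).
Proof.
move=> /presP h; apply/presP => u v; rewrite !inE !invMg !invgK.
exact: h.
Qed.

Lemma pres1 : pres phi [set 1].
Proof.
apply/presP => u v; rewrite !inE -!eq_mulgV1.
by apply/eqP/eqP => [->|/perm_inj].
Qed.

Definition atom z := \bigcap_(Y | pres phi Y && (z \in Y)) Y.

Lemma atom_pres z : pres phi (atom z).
Proof.
rewrite /atom; apply: (big_ind (pres phi)) => //; first exact: presT.
  exact: presI.
by move=> Y /andP [].
Qed.

Lemma atom_mem z : z \in atom z.
Proof. by apply/bigcapP => Y /andP []. Qed.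

Lemma atom_sub z Y : pres phi Y -> z \in Y -> atom z \subset Y.
Proof. by move=> p zY; apply: bigcap_inf; rewrite p zY. Qed.

Lemma atom_eq y z : y \in atom z -> atom y = atom z.
Proof.
move=> yz; apply/eqP; rewrite eqEsubset atom_sub ?atom_pres //=.
apply: atom_sub; first exact: atom_pres.
apply/negPn/negP => zny.
have : atom z \subset ~: atom y by apply: atom_sub; [apply/presC/atom_pres | rewrite inE].
by move/subsetP/(_ y yz); rewrite inE atom_mem.
Qed.

Lemma atom_cover Y : pres phi Y -> cover [set atom z | z in Y] = Y.
Proof.
move=> pY; apply/setP => x; apply/bigcupP/idP.
  by move=> [_ /imsetP [z zY ->]] /(subsetP (atom_sub pY zY)).
by move=> xY; exists (atom x); [apply: imset_f | apply: atom_mem].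
Qed.

Definition Satoms := [set atom z | z in [set: gT]].

Lemma Satoms_pres W : W \in Satoms -> pres phi W.
Proof. by move=> /imsetP [z _ ->]; apply: atom_pres. Qed.

Lemma Sstar_atoms Y : pres phi Y -> Sstar Satoms Y.
Proof.
move=> pY; exists [set atom z | z in Y]; last exact: atom_cover.
by apply/subsetP => _ /imsetP [z _ ->]; apply: imset_f.
Qed.

Lemma atoms_Sstar Y : Sstar Satoms Y -> pres phi Y.
Proof.
move=> [T TS <-]; apply: pres_cover => X XT; apply: Satoms_pres.
exact: (subsetP TS).
Qed.

Lemma atom1 : atom 1 = [set 1].
Proof.
apply/eqP; rewrite eqEsubset atom_sub ?pres1 ?set11 //=.
by rewrite sub1set atom_mem.
Qed.

Lemma atomV z : (atom z)^-1 = atom z^-1.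
Proof.
apply/eqP; rewrite eqEsubset [X in _ && X]atom_sub ?presVs ?atom_pres ?inE ?invgK ?atom_mem //.
rewrite andbT; apply/subsetP => y; rewrite inE => yz.
apply/bigcapP => Y /andP [pY zY].
have : atom z \subset Y^-1 by apply: atom_sub; rewrite ?presVs // inE.
by move/subsetP/(_ _ yz); rewrite inE invgK.
Qed.

Lemma partition_atoms : partition Satoms [set: gT].
Proof.
apply/and3P; split.
- apply/eqP/setP => x; rewrite inE; apply/bigcupP.
  by exists (atom x); [apply: imset_f | apply: atom_mem].
- apply/trivIsetP => _ _ /imsetP [a _ ->] /imsetP [b _ ->] neq.
  apply/pred0P => x /=; apply/negP => /andP [xa xb].
  by move: neq; rewrite -(atom_eq xa) -(atom_eq xb) eqxx.
- apply/imsetP => -[z _ /esym/setP/(_ z)]; rewrite atom_mem inE //.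
Qed.

End Atoms.


Section Prod.
Variable gT : finGroupType.
Variable phi : {perm gT}.

Lemma gconv_alt (X Y : {set gT}) u v :
  gconv (ind X) (ind Y) (v * u^-1) = (\sum_w ind X (v * w^-1) * ind Y (w * u^-1))%R.
Proof.
rewrite /gconv (reindex_inj (h := fun w => v * w^-1)); last first.
  by move=> a b /mulgI /invg_inj.
by apply: eq_bigr => w _; rewrite invMg invgK !mulgA mulgKV.
Qed.

Lemma gconv_pres (X Y : {set gT}) u v : pres phi X -> pres phi Y ->
  gconv (ind X) (ind Y) (v * u^-1) = gconv (ind X) (ind Y) (phi v * (phi u)^-1).
Proof.
move=> /presP hX /presP hY; rewrite !gconv_alt [RHS](reindex_inj (h := phi)) /=; last exact: perm_inj.
by apply: eq_bigr => w _; rewrite /ind -hX -hY.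
Qed.

Lemma atoms_Sring : is_Sring (Satoms phi).
Proof.
split.
- exact: partition_atoms.
- by rewrite -(atom1 phi); apply: imset_f.
- by move=> _ /imsetP [z _ ->]; rewrite atomV; apply: imset_f.
move=> X Y /Satoms_pres pX /Satoms_pres pY.
set F := gconv (ind X) (ind Y).
have cst y z : y \in atom phi z -> F y = F z.
  move=> yz.
  have : atom phi z \subset [set t | F t == F z].
    apply: atom_sub; last by rewrite inE.
    by apply/presP => u v; rewrite !inE /F gconv_pres.
  by move/subsetP/(_ y yz); rewrite inE => /eqP.
exists (fun W => F (repr W)) => z.
rewrite (bigD1 (atom phi z)) /=; last exact: imset_f.
rewrite big1 ?GRing.addr0.
  rewrite /ind atom_mem GRing.mulr1; first [exact: cst _ _ (mem_repr _ (atom_mem phi z)) | exact: esym (cst _ _ (mem_repr _ (atom_mem phi z)))].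
move=> W /andP [WS neq]. move: WS neq. rewrite /Satoms. move=> /imsetP [w _ ->] neq.
rewrite /ind; case: (boolP (z \in atom phi w)) => [zw|nzw]; last by rewrite GRing.mulr0.
by move: neq; rewrite (atom_eq zw) eqxx.
Qed.

End Prod.


Section Main.
Variable gT : finGroupType.
Variable H : {group gT}.
Hypothesis nH : H <| [set: gT].

Definition Qh (phi : {perm gT}) := forall x, phi x * x^-1 \in H.

Lemma conjH c y : y \in H -> c * y * c^-1 \in H.
Proof.
move=> yH; have nc : c^-1 \in 'N(H) by apply: (subsetP (normal_norm nH)); rewrite inE.
by rewrite -(memJ_norm _ nc) in yH; rewrite conjgE invgK mulgA in yH.
Qed.

Lemma coset_pres phi x : Qh phi -> pres phi (H :* x).
Proof.
move=> Q; apply/presP => u v; rewrite !mem_rcoset.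
set a := phi v * v^-1; set b := phi u * u^-1.
have -> : phi v * (phi u)^-1 * x^-1 = a * ((v * u^-1) * b^-1 * (v * u^-1)^-1) * (v * u^-1 * x^-1).
    by rewrite /a /b !invMg !invgK !mulgA !mulgKV mulgK.
have cH : v * u^-1 * b^-1 * (v * u^-1)^-1 \in H by apply: conjH; rewrite groupV; exact: Q.
have aH : a \in H by exact: Q.
by rewrite -(mulgA a) (groupMl _ aH) (groupMl _ cH).
Qed.

Lemma Qh_conj phi f : pres f H -> Qh phi -> Qh (phi ^ f).
Proof.
move=> /presP pf Q x; rewrite -(permKV f x) permJ -pf; exact: Q.
Qed.

Lemma QhM phi psi : Qh phi -> Qh psi -> Qh (phi * psi).
Proof.
move=> Q1 Q2 x; rewrite permM -(mulgKV (phi x) (psi (phi x))) -mulgA.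
by rewrite groupM.
Qed.

Lemma QhV phi : Qh phi -> Qh phi^-1.
Proof.
move=> Q x; rewrite -{2}(permKV phi x); set y := phi^-1 x.
by rewrite -groupV invMg invgK.
Qed.

Lemma Qh_rmul h : h \in H -> Qh (rmul_perm h).
Proof. by move=> hH x; rewrite permE; apply: conjH. Qed.

Variables S S' : {set {set gT}}.
Hypothesis gen : generated_Sring S (rcosets H [set: gT]) S'.

Lemma Lmain phi : (forall Y, Sstar S Y -> pres phi Y) -> Qh phi ->
  forall X, X \in S' -> pres phi X.
Proof.
move=> pS Q X XS'; case: gen => _ _ _ /(_ (Satoms phi) (atoms_Sring phi)) min.
apply: atoms_Sstar; apply: min.
- by move=> Y /pS /Sstar_atoms.
- by move=> _ /rcosetsP [x _ ->]; apply: Sstar_atoms; apply: coset_pres.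
by exists [set X]; rewrite ?sub1set ?cover1.
Qed.

Lemma AutS'_star phi Y : phi \in AutS S' -> Sstar S Y -> pres phi Y.
Proof. by move=> pA hY; case: gen => _ hS _ _; apply: AutS_star pA (hS _ hY). Qed.

Lemma AutS'_Qh phi : phi \in AutS S' -> Qh phi.
Proof.
move=> pA y; case: gen => _ _ hc _.
have hy : H :* y \in rcosets H [set: gT] by apply/rcosetsP; exists y; rewrite ?inE.
have /presP /(_ 1 y) := AutS_star pA (hc _ hy).
have [p1 _] := AutSP _ _ pA.
by rewrite p1 invg1 !mulg1 rcoset_refl -mem_rcoset => <-.
Qed.

End Main.


Theorem theorem7p2 (gT : finGroupType) (S : {set {set gT}}) (H : {group gT})
    (S' : {set {set gT}}) :
  is_Sring S ->
  H <| [set: gT] ->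
  in_HA S H ->
  generated_Sring S (rcosets H [set: gT]) S' ->
  AutS S \subset 'N(<< AutS S' :|: Hright H >>).
Proof.
move=> _ nH HA gen; apply/subsetP => f fA.
have [f1 _] := AutSP _ _ fA.
have pfS : forall Y, Sstar S Y -> pres f Y by move=> Y; apply: AutS_star.
have pfH : pres f H by apply: pfS.
have inA (tau : {perm gT}) : tau 1 = 1 -> (forall Y, Sstar S Y -> pres tau Y) -> Qh H tau ->
    tau \in AutS S'.
  move=> t1 tS tQ; apply/AutSP; split => //; exact: (Lmain nH gen tS tQ).
rewrite inE -genJ gen_subG; apply/subsetP => _ /imsetP [s sA ->].
case/setUP: sA => [sA'|/imsetP [h hH ->]].
  have [s1 _] := AutSP _ _ sA'.
  apply: mem_gen; rewrite inE; apply/orP; left; apply: inA.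
  - by rewrite -{1}f1 permJ s1 f1.
  - move=> Y hY; rewrite conjgE; apply: presM; first exact/presV/pfS.
    by apply: presM; [exact: (@AutS'_star gT H S S' gen s Y sA' hY) | exact: pfS].
  - exact: Qh_conj pfH (AutS'_Qh gen sA').
set h' := f h.
have h'H : h' \in H.
  by have /presP /(_ 1 h) := pfH; rewrite f1 invg1 !mulg1 hH => <-.
have t1 : (rmul_perm h ^ f) 1 = rmul_perm h' 1 by rewrite -{1}f1 permJ !permE !mul1g.
rewrite -(mulgKV (rmul_perm h') (rmul_perm h ^ f)); apply: groupM; apply: mem_gen; rewrite inE; apply/orP.
  left; apply: inA.
  - by rewrite permM t1 permK.
  - move=> Y hY; apply: presM; last exact/presV/pres_rmul.
    rewrite conjgE; apply: presM; first exact/presV/pfS.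
    by apply: presM; [exact: pres_rmul | exact: pfS].
  - exact: QhM (Qh_conj pfH (Qh_rmul nH hH)) (QhV (Qh_rmul nH h'H)).
by right; apply: imset_f.
Qed.
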